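(* Let $R$ be a field and consider persistence modules over $(R, \mathbb{R}_{\ge 0}, \mathbb{R})$. If $M$ is finitely presented and bounded, then $M$ admits a critical series and $C(\varepsilon(M)) = \chi_{\mathcal{O}}(M)$, i.e. for every $g \in \mathbb{R}$ the value $\chi_{\mathcal{O}}(M)(g)$ equals the coefficient of $x^g$ in $C(\varepsilon(M))$.
   Context: A persistence module over $(R,\mathbb{R}_{\ge 0},\mathbb{R})$ is an $\mathbb{R}$-graded $R$-vector space $M = \bigoplus_{g\in\mathbb{R}} M_g$ with an action of the monoid ring $P = R[\mathbb{R}_{\ge 0}]$ such that the monomial $s \in \mathbb{R}_{\ge0}$ maps $M_g$ into $M_{g+s}$; morphisms are graded $P$-module homomorphisms. Free persistence modules are direct sums of shifted copies of $P$ (generated by homogeneous elements); $M$ is finitely presented if it is the cokernel of a morphism between finitely generated free persistence modules, and bounded if $\{g : M_g \ne 0\}$ is contained in a bounded interval. For $a<b$ real, $\operatorname{Region}[a,b)$ is the persistence module that is $R$ in degrees $g\in[a,b)$ and $0$ elsewhere, with the action of $s$ from degree $g$ to $g+s$ the identity if $[g,g+s]\subseteq[a,b)$ and $0$ otherwise. Every finitely presented bounded $M$ is isomorphic to a finite direct sum $\bigoplus_{i=1}^n \operatorname{Region}[\alpha_i,\alpha_i+\ell_i)$ with $\alpha_i\in\mathbb{R}$, $0<\ell_i<\infty$; its barcode is $\varepsilon(M) = \sum_{i=1}^n x^{\alpha_i}y^{\ell_i}$ (a formal sum with real exponents), and for a barcode $f = \sum_i x^{\alpha_i}y^{\ell_i}$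 one sets $B(f) = \sum_i x^{\alpha_i}$, $D(f) = \sum_i x^{\alpha_i+\ell_i}$, $C(f) = B(f)-D(f)$ (formal finite integer combinations of $x^g$, $g\in\mathbb{R}$). For $g\in\mathbb{R}$, $M_{\prec g} = \sum_{h<g} (g-h)M_h \subseteq M_g$ and $\mathcal{O}_g(M) = M_g/M_{\prec g}$; this is an additive functor (morphisms act by the induced maps). Given a free resolution $\cdots\to F_1\to F_0\to M\to 0$, let $H_i(\mathcal{O}_g)(M)$ be the $i$-th homology of $\cdots\to\mathcal{O}_g(F_1)\to\mathcal{O}_g(F_0)\to 0$. $M$ admits a critical series if for each $g$ all these are finite-dimensional and only finitely many are nonzero; then $\chi_{\mathcal{O}}(M)(g) = \sum_i (-1)^i \dim H_i(\mathcal{O}_g)(M)$, identified with the formal sum $\sum_g \chi_{\mathcal{O}}(M)(g)x^g$. *)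

(* Defs.v *)
(* with Stdlib's concrete reals R (a realType via Rstruct)
   as the grading group. The coefficient field is called K (the paper's R). *)
From Stdlib Require Import Reals.
From HB Require Import structures.
From mathcomp Require Import all_boot all_order all_algebra.
From mathcomp Require Import Rstruct.
Unset Strict Implicit.
Unset Printing Implicit Defensive.
Import Order.TTheory GRing.Theory Num.Theory.
Local Open Scope ring_scope.

Notation RR := Rdefinitions.R.

Unset Implicit Arguments.
(* A persistence module over (K, R_{>=0}, R): the graded pieces M_g and,
   for g <= h, the action of the monomial (h - g) : M_g -> M_h.
   The monoid-action axioms become identity and composition laws. *)
Record pmod (K : fieldType) := PMod {
  sp : RR -> lmodType K;
  mp : forall (g h : RR), g <= h -> sp g -> sp h;
  mp_lin : forall g h (H : g <= h), linear (mp g h H);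
  mp_id : forall g (H : g <= g) (x : sp g), mp g g H x = x;
  mp_comp : forall g h k (H1 : g <= h) (H2 : h <= k) (H3 : g <= k) (x : sp g),
      mp h k H2 (mp g h H1 x) = mp g k H3 x
}.

Arguments sp {K}.
Arguments mp {K} p {g h}.

Record pmor (K : fieldType) (M N : pmod K) := PMor {
  mor :> forall g, sp M g -> sp N g;
  mor_lin : forall t, linear (mor t);
  mor_nat : forall g h (H : g <= h) (x : sp M g),
      mp N H (mor g x) = mor h (mp M H x)
}.

Arguments mor {K M N}.
Arguments pmor {K}.
Set Implicit Arguments.

(* (e_i)_{i in I}, e_i homogeneous of degree a i, is a basis of M as a
   P-module: M is then the direct sum of the shifted copies P(-a i). *)
Definition free_basis (K : fieldType) (M : pmod K) (I : Type) (a : I -> RR)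
    (e : forall i, sp M (a i)) : Prop :=
  forall g : RR,
    (forall m : sp M g, exists (n : nat) (j : 'I_n -> I)
        (hj : forall k, a (j k) <= g) (c : 'I_n -> K),
        m = \sum_(k < n) c k *: mp M (hj k) (e (j k)))
    /\
    (forall (n : nat) (j : 'I_n -> I) (hj : forall k, a (j k) <= g)
        (c : 'I_n -> K),
        injective j ->
        \sum_(k < n) c k *: mp M (hj k) (e (j k)) = 0 ->
        forall k, c k = 0).

Definition is_free (K : fieldType) (M : pmod K) : Prop :=
  exists (I : Type) (a : I -> RR) (e : forall i, sp M (a i)), @free_basis K M _ a e.

Definition is_fg_free (K : fieldType) (M : pmod K) : Prop :=
  exists (m : nat) (a : 'I_m -> RR) (e : forall i, sp M (a i)), @free_basis K M _ a e.

Definition exact_at (K : fieldType) (A B C : pmod K) (f : pmor A B)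
    (h : pmor B C) : Prop :=
  forall g (y : sp B g), h g y = 0 <-> exists x : sp A g, y = f g x.

Definition surj_mor (K : fieldType) (A B : pmod K) (h : pmor A B) : Prop :=
  forall g (y : sp B g), exists x : sp A g, y = h g x.

Definition fin_presented (K : fieldType) (M : pmod K) : Prop :=
  exists (F1 F0 : pmod K) (phi : pmor F1 F0) (psi : pmor F0 M),
    [/\ is_fg_free F1, is_fg_free F0, exact_at phi psi & surj_mor psi].

Definition pm_bounded (K : fieldType) (M : pmod K) : Prop :=
  exists a b : RR, forall g, (exists v : sp M g, v != 0) -> a <= g <= b.

(* Region[a,b): K in degrees g in [a,b), 0 elsewhere, encoded as the row
   space K^(1 or 0); the action g -> h is the identity iff [g,h] ⊆ [a,b). *)
Definition inreg (a b g : RR) : bool := (a <= g) && (g < b).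

Definition reg_mp (K : fieldType) (a b : RR) (g h : RR) (H : g <= h)
    (v : 'rV[K]_(inreg a b g)) : 'rV[K]_(inreg a b h) :=
  v *m const_mx (if inreg a b g && inreg a b h then 1 else 0).

(* a finite direct sum of regions Region[alpha_k, alpha_k + l_k),
   k < n, with alpha = (s k).1, l = (s k).2 > 0, is internally isomorphic
   to M: there are morphisms iota_k : Region_k -> M such that in every
   degree the induced map from the direct sum is bijective. *)
Definition region_sp (K : fieldType) (a b : RR) (g : RR) : lmodType K :=
  'rV[K]_(inreg a b g).

Definition barcode_decomp (K : fieldType) (M : pmod K) (n : nat)
    (s : 'I_n -> RR * RR) : Prop :=
  (forall k, 0 < (s k).2) /\
  exists iota : forall k g, region_sp K (s k).1 ((s k).1 + (s k).2) g -> sp M g,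
    [/\ (forall k t, linear (iota k t)),
        (forall k g h (H : g <= h) v,
            mp M H (iota k g v)
            = iota k h (reg_mp H v)),
        (forall g (v w : forall k, region_sp K (s k).1 ((s k).1 + (s k).2) g),
            \sum_(k < n) iota k g (v k) = \sum_(k < n) iota k g (w k) ->
            forall k, v k = w k)
      & (forall g (m : sp M g), exists v : forall k,
            region_sp K (s k).1 ((s k).1 + (s k).2) g,
            m = \sum_(k < n) iota k g (v k))].

(* coefficient of x^g in C(epsilon(M)) = B - D for the barcode s *)
Definition C_coef (n : nat) (s : 'I_n -> RR * RR) (g : RR) : int :=
  (#|[pred k : 'I_n | (s k).1 == g]|%:Z
   - #|[pred k : 'I_n | (s k).1 + (s k).2 == g]|%:Z)%R.

(* M_{< g} = sum_{h<g} (g-h) M_h, as a predicate on M_g *)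
Definition prec (K : fieldType) (M : pmod K) (g : RR) (x : sp M g) : Prop :=
  exists (n : nat) (h : 'I_n -> RR) (H : forall k, h k < g)
    (m : forall k, sp M (h k)),
    x = \sum_(k < n) mp M (ltW (H k)) (m k).

(* free resolution  ... -> F 1 --d 0--> F 0 --eps--> M -> 0 *)
Definition free_resolution (K : fieldType) (M : pmod K) (F : nat -> pmod K)
    (d : forall i, pmor (F i.+1) (F i)) (eps : pmor (F 0%N) M) : Prop :=
  [/\ forall i, is_free (F i), surj_mor eps, exact_at (d 0%N) eps
    & forall i, exact_at (d i.+1) (d i)].

(* dim (Z / B) = n for subspaces B ⊆ Z of V (given as predicates) *)
Definition qdim (K : fieldType) (V : lmodType K) (Z B : V -> Prop) (n : nat)
  : Prop :=
  exists v : 'I_n -> V,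
    [/\ forall k, Z (v k),
        forall c : 'I_n -> K, B (\sum_(k < n) c k *: v k) -> forall k, c k = 0
      & forall z, Z z -> exists c : 'I_n -> K, B (z - \sum_(k < n) c k *: v k)].

(* H_i of  ... -> O_g(F 1) -> O_g(F 0) -> 0 , where O_g(F) = F_g / F_{<g}.
   H_i = (preimage in F_i,g of ker) / (preimage of im) *)
Definition hcycle (K : fieldType) (F : nat -> pmod K)
    (d : forall i, pmor (F i.+1) (F i)) (g : RR) (i : nat) : sp (F i) g -> Prop :=
  match i as i0 return sp (F i0) g -> Prop with
  | 0%N => fun _ => True
  | j.+1 => fun x => prec (d j g x)
  end.

Definition hbound (K : fieldType) (F : nat -> pmod K)
    (d : forall i, pmor (F i.+1) (F i)) (g : RR) (i : nat) (x : sp (F i) g)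
  : Prop :=
  exists (y : sp (F i.+1) g) (p : sp (F i) g), prec p /\ x = d i g y + p.

Definition hdim (K : fieldType) (F : nat -> pmod K)
    (d : forall i, pmor (F i.+1) (F i)) (g : RR) (i n : nat) : Prop :=
  qdim (@hcycle K F d g i) (@hbound K F d g i) n.

(* M admits a critical series, computed from the resolution (F, d), and
   chi_O(M)(g) = c for every g with value c g *)
Definition crit_series_value (K : fieldType) (F : nat -> pmod K)
    (d : forall i, pmor (F i.+1) (F i)) (chi : RR -> int) : Prop :=
  forall g : RR,
    [/\ forall i, exists n, hdim d g i n,
        exists N, forall i, (N <= i)%N -> hdim d g i 0
      & forall (N : nat) (dims : nat -> nat),
          (forall i, hdim d g i (dims i)) ->
          (forall i, (N <= i)%N -> dims i = 0%N) ->
          \sum_(i < N) (-1) ^+ i * (dims i)%:Z = chi g].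

(* Main.v *)
Require Import Defs.
From Stdlib Require Import Reals.
From HB Require Import structures.
From mathcomp Require Import all_boot all_order all_algebra.
From mathcomp Require Import Rstruct.
From mathcomp Require Import finmap.
From mathcomp.multinomials Require Import monalg.
From mathcomp Require Import boolp.
Import Order.TTheory GRing.Theory Num.Theory.
Local Open Scope ring_scope.

Set Implicit Arguments.
Unset Strict Implicit.
Unset Printing Implicit Defensive.


Section Lin.
Variables (K : fieldType) (U V : lmodType K) (f : U -> V).
Hypothesis fL : linear f.
Lemma lf0 : f 0 = 0.
Proof. have := fL 1 0 0; rewrite !scale1r addr0 => E. by apply: (addrI (f 0)); rewrite addr0 -E. Qed.
Lemma lfD x y : f (x + y) = f x + f y.
Proof. by have := fL 1 x y; rewrite !scale1r. Qed.
Lemma lfZ c x : f (c *: x) = c *: f x.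
Proof. by have := fL c x 0; rewrite !addr0 lf0 addr0. Qed.
Lemma lfN x : f (- x) = - f x.
Proof. by rewrite -scaleN1r lfZ scaleN1r. Qed.
Lemma lfB x y : f (x - y) = f x - f y.
Proof. by rewrite lfD lfN. Qed.
Lemma lf_sum (I : Type) (r : seq I) (P : pred I) (F : I -> U) :
  f (\sum_(i <- r | P i) F i) = \sum_(i <- r | P i) f (F i).
Proof.
elim: r => [|x r IH]; first by rewrite !big_nil lf0.
by rewrite !big_cons; case: (P x); rewrite ?lfD IH.
Qed.
End Lin.

Section Gen.
Variable K : fieldType.

Lemma mp_irr (M : pmod K) g h (H H' : g <= h) x : mp M H x = mp M H' x.
Proof. by rewrite (eq_irrelevance H H'). Qed.

Lemma mpL (M : pmod K) g h (H : g <= h) : linear (mp M H).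
Proof. exact: mp_lin. Qed.

Lemma mp0 (M : pmod K) g h (H : g <= h) : mp M H 0 = 0.
Proof. exact: lf0 (@mpL M g h H). Qed.
Lemma mpD (M : pmod K) g h (H : g <= h) x y : mp M H (x + y) = mp M H x + mp M H y.
Proof. exact: (lfD (@mpL M g h H) x y). Qed.

Lemma mpZ (M : pmod K) g h (H : g <= h) c x : mp M H (c *: x) = c *: mp M H x.
Proof. exact: (lfZ (@mpL M g h H) c x). Qed.
Lemma mpB (M : pmod K) g h (H : g <= h) x y : mp M H (x - y) = mp M H x - mp M H y.
Proof. exact: (lfB (@mpL M g h H) x y). Qed.
Lemma mpc (M : pmod K) g h k (H1 : g <= h) (H2 : h <= k) x :
  mp M H2 (mp M H1 x) = mp M (le_trans H1 H2) x.
Proof. exact: mp_comp. Qed.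

Lemma morL (M N : pmod K) (f : pmor M N) g : linear (f g).
Proof. exact: mor_lin. Qed.
Lemma mor0 (M N : pmod K) (f : pmor M N) g : f g 0 = 0.
Proof. exact: (lf0 (@morL M N f g)). Qed.
Lemma morD (M N : pmod K) (f : pmor M N) g x y : f g (x + y) = f g x + f g y.
Proof. exact: (lfD (@morL M N f g) x y). Qed.
Lemma morZ (M N : pmod K) (f : pmor M N) g c x : f g (c *: x) = c *: f g x.
Proof. exact: (lfZ (@morL M N f g) c x). Qed.
Lemma morB (M N : pmod K) (f : pmor M N) g x y : f g (x - y) = f g x - f g y.
Proof. exact: (lfB (@morL M N f g) x y). Qed.
Lemma morN (M N : pmod K) (f : pmor M N) g x : f g (- x) = - f g x.
Proof. exact: (lfN (@morL M N f g) x). Qed.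

Lemma prec_single (M : pmod K) g (x : sp M g) :
  prec x <-> exists h (Hh : h < g) (y : sp M h), x = mp M (ltW Hh) y.
Proof.
split.
  case=> n [h [H [m ->]]].
  elim: n h H m => [|n IH] h H m.
    have Hg : g - 1 < g by rewrite ltrBlDr ltrDl ltr01.
    by exists (g - 1), Hg, 0; rewrite big_ord0 mp0.
  rewrite big_ord_recr /=.
  have [h0 [H0 [y0 ->]]] := IH (fun k => h (widen_ord (leqnSn n) k))
     (fun k => H (widen_ord (leqnSn n) k)) (fun k => m (widen_ord (leqnSn n) k)).
  set hn := h ord_max.
  have Hlt : Num.max h0 hn < g by rewrite gt_max H0 H.
  have E1 : h0 <= Num.max h0 hn by rewrite le_max lexx.
  have E2 : hn <= Num.max h0 hn by rewrite le_max lexx orbT.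
  exists (Num.max h0 hn), Hlt, (mp M E1 y0 + mp M E2 (m ord_max)).
  by rewrite mpD !mpc; congr (_ + _); apply: mp_irr.
case=> h [Hh [y ->]].
exists 1%N, (fun _ => h), (fun _ => Hh), (fun _ => y).
by rewrite big_ord1.
Qed.

Lemma prec_mp (M : pmod K) g h (Hh : h < g) (y : sp M h) : prec (mp M (ltW Hh) y).
Proof. by apply/prec_single; exists h, Hh, y. Qed.

Lemma prec_mp' (M : pmod K) g h (Hh : h < g) (H : h <= g) (y : sp M h) : prec (mp M H y).
Proof. by rewrite (mp_irr _ (ltW Hh)); apply: prec_mp. Qed.

Lemma prec_push (M : pmod K) g e (x : sp M g) : e < g -> prec x ->
  exists h (He : e <= h) (Hh : h < g) (y : sp M h), x = mp M (ltW Hh) y.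
Proof.
move=> eg /prec_single [h [Hh [y ->]]].
have Hlt : Num.max h e < g by rewrite gt_max Hh eg.
have E1 : h <= Num.max h e by rewrite le_max lexx.
have E2 : e <= Num.max h e by rewrite le_max lexx orbT.
exists (Num.max h e), E2, Hlt, (mp M E1 y).
by rewrite mpc; apply: mp_irr.
Qed.

Lemma prec0 (M : pmod K) g : prec (0 : sp M g).
Proof.
have Hg : g - 1 < g by rewrite ltrBlDr ltrDl ltr01.
by apply/prec_single; exists (g - 1), Hg, 0; rewrite mp0.
Qed.

Lemma precD (M : pmod K) g (x y : sp M g) : prec x -> prec y -> prec (x + y).
Proof.
move=> /prec_single [h [Hh [u ->]]] /prec_single [h' [Hh' [u' ->]]].
have Hlt : Num.max h h' < g by rewrite gt_max Hh Hh'.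
have E1 : h <= Num.max h h' by rewrite le_max lexx.
have E2 : h' <= Num.max h h' by rewrite le_max lexx orbT.
apply/prec_single; exists (Num.max h h'), Hlt, (mp M E1 u + mp M E2 u').
by rewrite mpD !mpc; congr (_ + _); apply: mp_irr.
Qed.

Lemma precZ (M : pmod K) g c (x : sp M g) : prec x -> prec (c *: x).
Proof.
move=> /prec_single [h [Hh [u ->]]].
by apply/prec_single; exists h, Hh, (c *: u); rewrite mpZ.
Qed.

Lemma precN (M : pmod K) g (x : sp M g) : prec x -> prec (- x).
Proof. by move=> px; rewrite -scaleN1r; apply: precZ. Qed.

Lemma precB (M : pmod K) g (x y : sp M g) : prec x -> prec y -> prec (x - y).
Proof. by move=> px py; apply: precD => //; apply: precN. Qed.

Lemma prec_sum (M : pmod K) g (I : Type) (r : seq I) (P : pred I) (F : I -> sp M g) :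
  (forall i, P i -> prec (F i)) -> prec (\sum_(i <- r | P i) F i).
Proof.
move=> H; elim: r => [|x r IH]; first by rewrite big_nil; apply: prec0.
by rewrite big_cons; case: ifP => // Px; apply: precD => //; apply: H.
Qed.

Lemma prec_mor (M N : pmod K) (f : pmor M N) g (x : sp M g) :
  prec x -> prec (f g x).
Proof.
move=> /prec_single [h [Hh [u ->]]].
by apply/prec_single; exists h, Hh, (f h u); rewrite mor_nat.
Qed.

End Gen.


Section Q.
Variable K : fieldType.

Definition subsp (V : lmodType K) (B : V -> Prop) :=
  [/\ B 0, forall x y, B x -> B y -> B (x + y) & forall c x, B x -> B (c *: x)].

Lemma subsp_sum (V : lmodType K) (B : V -> Prop) (I : Type) (r : seq I) (P : pred I) F :
  subsp B -> (forall i, P i -> B (F i)) -> B (\sum_(i <- r | P i) F i).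
Proof.
case=> B0 BD BZ H; elim: r => [|x r IH]; first by rewrite big_nil.
by rewrite big_cons; case: ifP => // Px; apply: BD => //; apply: H.
Qed.

Lemma subspB (V : lmodType K) (B : V -> Prop) x y : subsp B -> B x -> B y -> B (x - y).
Proof. by case=> B0 BD BZ bx by0; apply: BD => //; rewrite -scaleN1r; apply: BZ. Qed.

Lemma qdim0 (V : lmodType K) (Z B : V -> Prop) :
  (forall z, Z z -> B z) -> qdim Z B 0.
Proof.
move=> H; exists (fun _ => 0); split; first by case.
  by move=> c _; case.
by move=> z /H Bz; exists (fun _ => 0); rewrite big_ord0 subr0.
Qed.

Lemma qdim_fam (V : lmodType K) (Z B : V -> Prop) (I : finType) (A : pred I) (w : I -> V) :
  subsp B ->
  (forall k, A k -> Z (w k)) ->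
  (forall c : I -> K, B (\sum_(k in A) c k *: w k) -> forall k, A k -> c k = 0) ->
  (forall z, Z z -> exists c : I -> K, B (z - \sum_(k in A) c k *: w k)) ->
  qdim Z B #|A|.
Proof.
move=> sB HZ Hind Hsp; exists (fun i => w (enum_val i)); split.
- by move=> i; apply: HZ; apply: enum_valP.
- move=> c Bc i0.
  pose h := enum_rank_in (enum_valP i0).
  have := Hind (fun k => c (h k)).
  rewrite big_enum_val /=.
  rewrite /h; under eq_bigr do rewrite enum_valK_in.
  move=> /(_ Bc (enum_val i0) (enum_valP i0)).
  by rewrite enum_valK_in.
- move=> z /Hsp [c Bc]; exists (fun i => c (enum_val i)).
  by move: Bc; rewrite big_enum_val.
Qed.

Lemma qdim_transport (V W : lmodType K) (ZV BV : V -> Prop) (ZW BW : W -> Prop)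
   (R : V -> W -> Prop) n :
  R 0 0 ->
  (forall x y x' y' c, R x y -> R x' y' -> R (c *: x + x') (c *: y + y')) ->
  (forall w, ZW w -> exists v, ZV v /\ R v w) ->
  (forall v, ZV v -> exists w, ZW w /\ R v w) ->
  (forall v w, R v w -> (BV v <-> BW w)) ->
  qdim ZW BW n -> qdim ZV BV n.
Proof.
move=> R0 RL R2 R3 R4 [w [Zw Ind Sp]].
have [v Hv] := fin_all_exists (fun k => R2 (w k) (Zw k)).
have Rsum : forall c : 'I_n -> K,
    R (\sum_(k < n) c k *: v k) (\sum_(k < n) c k *: w k).
  move=> c; apply: (big_ind2 R) => //.
    by move=> x1 x2 y1 y2 r1 r2; have := RL _ _ _ _ 1 r1 r2; rewrite !scale1r.
  by move=> k _; have := RL _ _ _ _ (c k) (proj2 (Hv k)) R0; rewrite !addr0.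
exists v; split.
- by move=> k; case: (Hv k).
- by move=> c /(R4 _ _ (Rsum c)); apply: Ind.
- move=> z /R3 [w0 [Zw0 Rzw]].
  have [c Bc] := Sp w0 Zw0; exists c.
  apply/(R4 _ (w0 - \sum_(k < n) c k *: w k)) => //.
  by have := RL _ _ _ _ (-1) (Rsum c) Rzw; rewrite !scaleN1r ![- _ + _]addrC.
Qed.

Lemma qdim_le (V : lmodType K) (Z B : V -> Prop) n m :
  subsp B -> qdim Z B n -> qdim Z B m -> (n <= m)%N.
Proof.
move=> sB [v [Zv Indv _]] [w [_ _ Spw]].
have [c Hc] := fin_all_exists (fun k => Spw (v k) (Zv k)).
rewrite leqNgt; apply/negP => ltmn.
pose C : 'M[K]_(n, m) := \matrix_(k, j) c k j.
have Hr : (0 < \rank (kermx C))%N.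
  rewrite mxrank_ker subn_gt0; apply: leq_ltn_trans ltmn; exact: rank_leq_col.
have [k0 Hk0] : exists k0, row k0 (kermx C) != 0.
  apply/existsP; rewrite -negb_forall; apply/negP => /forallP H0.
  have : kermx C = 0 by apply/row_matrixP => k; rewrite row0; apply/eqP; apply: H0.
  by move=> E; move: Hr; rewrite E mxrank0.
set lam := row k0 (kermx C) in Hk0.
have lamC : lam *m C = 0 by apply/sub_kermxP; rewrite row_sub.
have E : \sum_(k < n) lam 0 k *: (v k - \sum_(j < m) c k j *: w j)
     = \sum_(k < n) lam 0 k *: v k - \sum_(j < m) (lam *m C) 0 j *: w j.
  under eq_bigr do rewrite scalerBr.
  rewrite sumrB; congr (_ - _).
  under [RHS]eq_bigr do rewrite mxE scaler_suml.
  rewrite exchange_big /=; apply: eq_bigr => k _; rewrite scaler_sumr.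
  by apply: eq_bigr => j _; rewrite /C mxE scalerA.
have Bs : B (\sum_(k < n) lam 0 k *: v k).
  have : B (\sum_(k < n) lam 0 k *: (v k - \sum_(j < m) c k j *: w j)).
    by apply: subsp_sum => // k _; case: sB => _ _; apply; apply: Hc.
  rewrite E lamC [X in _ - X](_ : _ = 0) ?subr0 //.
  by apply: big1 => j _; rewrite mxE scale0r.
have := Indv _ Bs => H0; move/negP: Hk0; apply; apply/eqP/rowP => k.
by rewrite H0 mxE.
Qed.

Lemma qdim_uniq (V : lmodType K) (Z B : V -> Prop) n m :
  subsp B -> qdim Z B n -> qdim Z B m -> n = m.
Proof. by move=> sB qn qm; apply/eqP; rewrite eqn_leq (qdim_le sB qn qm) (qdim_le sB qm qn). Qed.
End Q.


Section Free.
Variable K : fieldType.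

Lemma mp_e_eq (M : pmod K) (I : Type) (a : I -> RR) (e : forall i, sp M (a i))
  i i' (E : i = i') g (H : a i <= g) (H' : a i' <= g) :
  mp M H (e i) = mp M H' (e i').
Proof. by subst; apply: mp_irr. Qed.

Lemma free_inj (M : pmod K) (I : Type) (a : I -> RR) (e : forall i, sp M (a i)) :
  free_basis e -> forall h g (H : h <= g) (x : sp M h), mp M H x = 0 -> x = 0.
Proof.
move=> fb h g H x Hx.
have [n [j [hj [c Ex]]]] := (fb h).1 x.
pose I' := {classic I}.
pose s : seq I' := undup [seq (j k : I') | k <- enum 'I_n].
have js : forall k, (j k : I') \in s.
  by move=> k; rewrite mem_undup; apply: map_f; rewrite mem_enum.
pose p k : 'I_(size s) := Ordinal (etrans (index_mem _ _) (js k)).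
pose j' (t : 'I_(size s)) : I := tnth (in_tuple s) t.
have j'inj : injective j'.
  by move=> t1 t2; rewrite /j' => E; apply/(tuple_uniqP (in_tuple s)) => //; apply: undup_uniq.
have jpk : forall k, j' (p k) = j k.
  by move=> k; rewrite /j' (tnth_nth (j k : I')) /= nth_index.
have hj' : forall t, a (j' t) <= h.
  move=> t; have : (j' t : I') \in s by apply: mem_tnth.
  rewrite mem_undup => /mapP [k _ ->]; exact: hj.
pose c' t := \sum_(k < n | p k == t) c k.
have key : forall g' (P1 : forall k, a (j k) <= g') (P2 : forall t, a (j' t) <= g'),
    \sum_(k < n) c k *: mp M (P1 k) (e (j k))
    = \sum_(t < size s) c' t *: mp M (P2 t) (e (j' t)).
  move=> g' P1 P2.
  rewrite (partition_big p (fun _ => true)) //=.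
  apply: eq_bigr => t _; rewrite /c' scaler_suml.
  apply: eq_big => [k|k /eqP pk] //.
  congr (_ *: _); apply: mp_e_eq; by rewrite -pk jpk.
have P1 : forall k, a (j k) <= g by move=> k; exact: le_trans (hj k) H.
have P2 : forall t, a (j' t) <= g by move=> t; exact: le_trans (hj' t) H.
have c'0 : forall t, c' t = 0.
  apply: ((fb g).2 _ j' P2 c' j'inj).
  rewrite -(key g P1 P2) -[RHS]Hx Ex (lf_sum (@mpL _ M _ _ H)).
  by apply: eq_bigr => k _; rewrite mpZ mpc; congr (_ *: _); apply: mp_irr.
rewrite Ex (key h hj hj').
by apply: big1 => t _; rewrite c'0 scale0r.
Qed.

Lemma free_inj' (M : pmod K) : is_free M ->
  forall h g (H : h <= g) (x : sp M h), mp M H x = 0 -> x = 0.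
Proof. by case=> I [a [e fb]]; apply: free_inj fb. Qed.

End Free.

Section Res.
Variables (K : fieldType) (M : pmod K) (F : nat -> pmod K)
  (d : forall i, pmor (F i.+1) (F i)) (eps : pmor (F 0%N) M).
Hypothesis fr : free_resolution d eps.

Lemma dd i g x : d i g (d i.+1 g x) = 0.
Proof. by case: fr => _ _ _ ex; apply/(ex i g); exists x. Qed.

Lemma epsd g x : eps g (d 0%N g x) = 0.
Proof. by case: fr => _ _ ex _; apply/(ex g); exists x. Qed.

Lemma exd i g y : d i g y = 0 -> exists x, y = d i.+1 g x.
Proof. by case: fr => _ _ _ ex; move/(ex i g). Qed.

Lemma exeps g y : eps g y = 0 -> exists x, y = d 0%N g x.
Proof. by case: fr => _ _ ex _; move/(ex g). Qed.

Lemma surjeps g m : exists y, m = eps g y.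
Proof. by case: fr => _ su _ _; apply: su. Qed.

Lemma Finj i h g (H : h <= g) (x : sp (F i) h) : mp (F i) H x = 0 -> x = 0.
Proof. by case: fr => fe _ _ _ Hx; apply: (free_inj' (fe i) Hx). Qed.

Lemma hbound_sub g i : subsp (@hbound K F d g i).
Proof.
split.
- by exists 0, 0; split; [apply: prec0 | rewrite mor0 addr0].
- move=> x y [y1 [p1 [pp1 ->]]] [y2 [p2 [pp2 ->]]].
  exists (y1 + y2), (p1 + p2); split; first exact: precD.
  by rewrite morD addrACA.
- move=> c x [y1 [p1 [pp1 ->]]]; exists (c *: y1), (c *: p1); split.
    exact: precZ.
  by rewrite morZ scalerDr.
Qed.

Lemma hdim_vanish g i : hdim d g i.+2 0.
Proof.
apply: qdim0 => x /= px.
have [h [Hh [y Ey]]] := (prec_single _).1 px.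
have dy : d i h y = 0.
  apply: (@Finj i h g (ltW Hh) (d i h y)); rewrite mor_nat -Ey; exact: dd.
have [z Ez] := exd dy.
have : d i.+1 g (x - mp (F i.+2) (ltW Hh) z) = 0.
  by rewrite morB -mor_nat -Ez -Ey subrr.
case/exd => w Ew.
exists w, (mp (F i.+2) (ltW Hh) z); split; first exact: prec_mp.
by rewrite -Ew subrK.
Qed.

End Res.


Section Res2.
Variables (K : fieldType) (M : pmod K) (F : nat -> pmod K)
  (d : forall i, pmor (F i.+1) (F i)) (eps : pmor (F 0%N) M).
Hypothesis fr : free_resolution d eps.

Lemma H0_eq g n : qdim (fun _ : sp M g => True) (@prec K M g) n -> hdim d g 0 n.
Proof.
rewrite /hdim /=.
apply: (qdim_transport (R := fun x m => eps g x = m)).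
- exact: mor0.
- by move=> x y x' y' c <- <-; rewrite morD morZ.
- by move=> w _; have [y ->] := surjeps fr w; exists y.
- by move=> v _; exists (eps g v).
- move=> v w <-; split.
    by case=> y [p [pp ->]]; rewrite morD (epsd fr) add0r; apply: prec_mor.
  case/prec_single => h [Hh [m Em]].
  have [y' Ey'] := surjeps fr m.
  have : eps g (v - mp (F 0%N) (ltW Hh) y') = 0.
    by rewrite morB -mor_nat -Ey' Em subrr.
  case/(exeps fr) => y E.
  exists y, (mp (F 0%N) (ltW Hh) y'); split; first exact: prec_mp.
  by rewrite -E subrK.
Qed.

Lemma H1_eq g e (eg : e < g)
  (Psurj : forall h (H1 : e <= h) (H2 : h < g) (m : sp M h),
       exists m0, m = mp M H1 m0)
  (Pinj : forall h (H1 : e <= h) (H2 : h < g) (m0 : sp M e),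
       mp M H1 m0 = 0 -> m0 = 0) n :
  qdim (fun m : sp M e => mp M (ltW eg) m = 0) (fun m => m = 0) n ->
  hdim d g 1 n.
Proof.
rewrite /hdim /=.
pose R (x : sp (F 1%N) g) (m : sp M e) := exists (y : sp (F 0%N) e) (p : sp (F 1%N) g),
  [/\ prec p, d 0%N g (x - p) = mp (F 0%N) (ltW eg) y & eps e y = m].
apply: (qdim_transport (R := R)).
- exists 0, 0; split; first exact: prec0.
    by rewrite subr0 mor0 mp0.
  exact: mor0.
- move=> x y x' y' c [u [p [pp Ep Eu]]] [u' [p' [pp' Ep' Eu']]].
  exists (c *: u + u'), (c *: p + p'); split.
  + by apply: precD => //; apply: precZ.
  + by rewrite opprD addrACA -scalerBr morD morZ Ep Ep' mpD mpZ.
  + by rewrite morD morZ Eu Eu'.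
- move=> m Hm.
  have [y Ey] := surjeps fr m.
  have : eps g (mp (F 0%N) (ltW eg) y) = 0 by rewrite -mor_nat -Ey.
  case/(exeps fr) => x Ex.
  exists x; split.
    by rewrite /= -Ex; apply: prec_mp.
  exists y, 0; split; [exact: prec0 | by rewrite subr0 | by []].
- move=> x /= px.
  have [h [He [Hh [y' Ey']]]] := prec_push eg px.
  have [m0 Em0] := Psurj h He Hh (eps h y').
  have [y0 Ey0] := surjeps fr m0.
  have : eps h (y' - mp (F 0%N) He y0) = 0 by rewrite morB -mor_nat -Ey0 Em0 subrr.
  case/(exeps fr) => z Ez.
  exists m0; split.
    rewrite (mp_irr _ (le_trans He (ltW Hh))) -mpc -Em0 mor_nat -Ey'.
    exact: epsd.
  exists y0, (mp (F 1%N) (ltW Hh) z); split; first exact: prec_mp.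
    rewrite morB Ey' -mor_nat -Ez mpB mpc opprB addrC subrK.
    exact: mp_irr.
  by [].
- move=> x m [y [p [pp Ep Ey]]]; split.
  + case=> y2 [q [pq Ex]].
    have Eq : d 0%N g (q - p) = mp (F 0%N) (ltW eg) y.
      by rewrite -Ep Ex -addrA [RHS]morD (dd fr) add0r.
    have [h [He [Hh [r Er]]]] := prec_push eg (precB pq pp).
    have Hr : d 0%N h r = mp (F 0%N) He y.
      apply/eqP; rewrite -subr_eq0; apply/eqP.
      apply: (@Finj _ _ _ _ _ fr 0%N h g (ltW Hh)).
      rewrite mpB mor_nat -Er Eq mpc; apply/eqP; rewrite subr_eq0; apply/eqP.
      exact: mp_irr.
    apply: (Pinj h He Hh); rewrite -Ey mor_nat -Hr.
    exact: (epsd fr).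
  + move=> Em; rewrite Em in Ey.
    case/(exeps fr): Ey => w Ew.
    have : d 0%N g (x - p - mp (F 1%N) (ltW eg) w) = 0.
      by rewrite morB Ep -mor_nat -Ew subrr.
    case/(exd fr) => y2 E2.
    exists y2, (p + mp (F 1%N) (ltW eg) w); split.
      by apply: precD => //; apply: prec_mp.
    by rewrite -E2 [p + _]addrC addrA subrK subrK.
Qed.

End Res2.


Section Mx.
Variable K : fieldType.
Lemma rv0 (b : bool) (v : 'rV[K]_b) : b = false -> v = 0.
Proof. by case: b v => // v _; apply: thinmx0. Qed.
Lemma rvs (b : bool) (v : 'rV[K]_b) : exists c : K, v = c *: const_mx 1.
Proof.
case: b v => v; last by exists 0; rewrite scale0r; apply: thinmx0.
by exists (v 0 0); apply/rowP => j; rewrite !mxE (ord1 j) mulr1.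
Qed.
Lemma rvZ0 (b : bool) (c : K) : b -> (c *: const_mx 1 : 'rV[K]_b) = 0 -> c = 0.
Proof.
case: b => // _ /rowP /(_ 0); by rewrite !mxE mulr1.
Qed.
Lemma rmp (b1 b2 : bool) :
  (const_mx 1 : 'rV[K]_b1) *m const_mx (if b1 && b2 then 1 else 0)
  = (if b1 && b2 then const_mx 1 else 0 : 'rV[K]_b2).
Proof.
case: b1 b2 => [] [] /=; apply/rowP => j; rewrite !mxE.
- by rewrite big_ord1 !mxE mulr1.
all: by rewrite big1 // => i _; rewrite !mxE mulr0.
Qed.
End Mx.

Section Bar.
Variables (K : fieldType) (M : pmod K) (n : nat) (s : 'I_n -> RR * RR).
Definition inr k g := inreg (s k).1 ((s k).1 + (s k).2) g.

Lemma bar_basis : barcode_decomp M s -> exists u : forall (k : 'I_n) g, sp M g,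
 [/\ (forall g m, exists c : 'I_n -> K, m = \sum_k c k *: u k g),
     (forall g c, \sum_k c k *: u k g = 0 -> forall k, inr k g -> c k = 0),
     (forall k g, ~~ inr k g -> u k g = 0) &
     (forall k g h (H : g <= h),
        mp M H (u k g) = if inr k g && inr k h then u k h else 0)].
Proof.
case=> _ [iota [iL inat iinj isurj]].
exists (fun k g => iota k g (const_mx 1)); split.
- move=> g m; have [v Ev] := isurj g m.
  have [c Hc] := fin_all_exists (fun k => rvs (v k)).
  exists c; rewrite Ev; apply: eq_bigr => k _.
  by rewrite Hc (lfZ (iL k g)).
- move=> g c Hs k Hk.
  have := iinj g (fun k => c k *: const_mx 1) (fun _ => 0).
  have E : \sum_k iota k g (c k *: const_mx 1) = \sum_(k < n) iota k g 0.
    rewrite (eq_bigr (fun k => c k *: iota k g (const_mx 1))); last first.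
      by move=> i _; rewrite (lfZ (iL i g)).
    by rewrite Hs big1 // => i _; rewrite (lf0 (iL i g)).
  by move=> /(_ E k); apply: rvZ0.
- move=> k g Hk; rewrite (rv0 (const_mx 1)); first exact: (lf0 (iL k g)).
  by apply/negbTE.
- move=> k g h H; rewrite inat /reg_mp rmp.
  by case: ifP => _ //; rewrite (lf0 (iL k h)).
Qed.

Variable u : forall (k : 'I_n) g, sp M g.
Hypothesis B1 : forall g m, exists c : 'I_n -> K, m = \sum_k c k *: u k g.
Hypothesis B2 : forall g c, \sum_k c k *: u k g = 0 -> forall k, inr k g -> c k = 0.
Hypothesis B3 : forall k g, ~~ inr k g -> u k g = 0.
Hypothesis B4 : forall k g h (H : g <= h),
        mp M H (u k g) = if inr k g && inr k h then u k h else 0.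
Hypothesis pos : forall k, 0 < (s k).2.

Lemma inrE k g : inr k g = ((s k).1 <= g) && (g < (s k).1 + (s k).2).
Proof. by []. Qed.

Lemma mp_sum g h (H : g <= h) (c : 'I_n -> K) :
  mp M H (\sum_k c k *: u k g) =
  \sum_k (if inr k g && inr k h then c k else 0) *: u k h.
Proof.
rewrite (lf_sum (@mpL _ M _ _ H)); apply: eq_bigr => k _.
by rewrite mpZ B4; case: ifP; rewrite ?scaler0 ?scale0r.
Qed.

Lemma sum_in (A : pred 'I_n) (c : 'I_n -> K) g :
  \sum_(k in A) c k *: u k g = \sum_k (if k \in A then c k else 0) *: u k g.
Proof. by rewrite big_mkcond; apply: eq_bigr => k _; case: ifP; rewrite ?scale0r. Qed.

Lemma sumB (c c' : 'I_n -> K) g :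
  \sum_k c k *: u k g - \sum_k c' k *: u k g = \sum_k (c k - c' k) *: u k g.
Proof. by rewrite -sumrB; apply: eq_bigr => k _; rewrite scalerBl. Qed.

Lemma sum0 (c : 'I_n -> K) g : (forall k, inr k g -> c k = 0) -> \sum_k c k *: u k g = 0.
Proof.
move=> H; apply: big1 => k _; case: (boolP (inr k g)) => Hk.
  by rewrite H // scale0r.
by rewrite B3 // scaler0.
Qed.

Lemma H0M g : qdim (fun _ : sp M g => True) (@prec K M g) #|[pred k | (s k).1 == g]|.
Proof.
apply: (qdim_fam (w := fun k => u k g)).
- by split; [apply: prec0 | apply: precD | apply: precZ].
- by [].
- move=> c /prec_single [h [Hh [y Ey]]] k Ak.
  have [c' Ec'] := B1 y.
  have E0 : \sum_k ((if k \in [pred k | (s k).1 == g] then c k else 0)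
     - (if inr k h && inr k g then c' k else 0)) *: u k g = 0.
    by rewrite -sumB -(mp_sum (ltW Hh)) -Ec' -Ey -sum_in subrr.
  move: Ak; rewrite /= => /eqP Ak.
  have Hkg : inr k g by rewrite inrE Ak lexx ltrDl pos.
  have := B2 E0 Hkg; rewrite inE /= Ak eqxx.
  have -> : inr k h = false by rewrite inrE Ak leNgt Hh.
  by rewrite /= subr0.
- move=> z _; have [c Ez] := B1 z; exists c.
  rewrite sum_in Ez sumB; apply: prec_sum => k _.
  case: ifP => Ak; first by rewrite subrr scale0r; apply: prec0.
  apply: precZ; case: (boolP (inr k g)) => Hk; last by rewrite B3 //; apply: prec0.
  have Hak : (s k).1 <= g by move: Hk; rewrite inrE => /andP [].
  have Ne : (s k).1 != g by move: Ak; rewrite inE /= => ->.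
  have Hlt : (s k).1 < g by rewrite lt_neqAle Ne Hak.
  have Hkk : inr k (s k).1 by rewrite inrE lexx ltrDl pos.
  have := B4 k Hak; rewrite Hkk Hk /= => <-.
  exact: prec_mp'.
Qed.

Section E.
Variables (g e : RR) (eg : e < g).
Hypothesis He : forall k, ((s k).1 < g -> (s k).1 <= e) /\
   ((s k).1 + (s k).2 < g -> (s k).1 + (s k).2 <= e).

Lemma H1M : qdim (fun m : sp M e => mp M (ltW eg) m = 0) (fun m => m = 0)
   #|[pred k | (s k).1 + (s k).2 == g]|.
Proof.
apply: (qdim_fam (w := fun k => u k e)).
- by split => // [x y -> ->|c x ->]; rewrite ?addr0 ?scaler0.
- move=> k; rewrite inE /= => /eqP Eb.
  by rewrite B4 (_ : inr k g = false) ?andbF // inrE Eb ltxx andbF.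
- move=> c; rewrite sum_in => /B2 H k Ak.
  move: Ak; rewrite /= => /eqP Eb.
  have Hke : inr k e.
    rewrite inrE Eb eg andbT; apply: (He k).1; rewrite -Eb ltrDl pos //.
  by have := @H k Hke; rewrite inE /= Eb eqxx.
- move=> z Hz; have [c Ez] := B1 z; exists c.
  move: Hz; rewrite Ez mp_sum => /B2 H.
  rewrite (sum_in [pred k | (s k).1 + (s k).2 == g]) sumB; apply: sum0 => k Hke.
  case: ifP => Ak; first by rewrite subrr.
  rewrite subr0; have := @H k; rewrite Hke /=.
  have Hkg : inr k g.
    move: Hke; rewrite !inrE => /andP [H1 H2].
    rewrite (le_trans H1 (ltW eg)) /=.
    rewrite ltNge; apply/negP => Hbg.
    have Ne : (s k).1 + (s k).2 != g by move: Ak; rewrite inE /= => ->.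
    have Hlt : (s k).1 + (s k).2 < g by rewrite lt_neqAle Ne Hbg.
    by move: ((He k).2 Hlt); rewrite leNgt H2.
  by rewrite Hkg; apply.
Qed.

Lemma Psurj h (H1 : e <= h) (H2 : h < g) (m : sp M h) : exists m0, m = mp M H1 m0.
Proof.
have [c Ec] := B1 m; exists (\sum_k c k *: u k e).
rewrite mp_sum Ec; apply: eq_bigr => k _.
case: (boolP (inr k h)) => Hkh; last by rewrite B3 // !scaler0.
suff -> : inr k e by [].
move: Hkh; rewrite !inrE => /andP [Ha Hb].
rewrite (le_lt_trans H1 Hb) andbT; apply: (He k).1; exact: le_lt_trans Ha H2.
Qed.

Lemma Pinj h (H1 : e <= h) (H2 : h < g) (m0 : sp M e) : mp M H1 m0 = 0 -> m0 = 0.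
Proof.
have [c ->] := B1 m0; rewrite mp_sum => /B2 H.
apply: sum0 => k Hke; have := @H k; rewrite Hke /=.
have Hkh : inr k h.
  move: Hke; rewrite !inrE => /andP [Ha Hb].
  rewrite (le_trans Ha H1) /= ltNge; apply/negP => Hbh.
  have := (He k).2 (le_lt_trans Hbh H2); by rewrite leNgt Hb.
by rewrite Hkh; apply.
Qed.
End E.

Lemma e_exists g : exists e, e < g /\ forall k, ((s k).1 < g -> (s k).1 <= e) /\
   ((s k).1 + (s k).2 < g -> (s k).1 + (s k).2 <= e).
Proof.
pose G k := Num.max (if (s k).1 < g then (s k).1 else g - 1)
                    (if (s k).1 + (s k).2 < g then (s k).1 + (s k).2 else g - 1).
pose l := [seq G k | k <- enum 'I_n].
have Hg : g - 1 < g by rewrite ltrBlDr ltrDl ltr01.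
have GG : forall k, G k < g.
  by move=> k; rewrite /G gt_max; apply/andP; split; (case: ifP => [->//|_]; exact: Hg).
exists (foldr Num.max (g - 1) l); split.
  have : all (fun x => x < g) l by apply/allP => x /mapP [k _ ->].
  by elim: l => //= x l IH /andP [Hx /IH Hl]; rewrite gt_max Hx Hl.
have Hle : forall x, x \in l -> x <= foldr Num.max (g - 1) l.
  elim: l => //= y l IH x; rewrite inE => /orP [/eqP ->|/IH Hx].
    by rewrite le_max lexx.
  by rewrite le_max Hx orbT.
move=> k; have Gk : G k \in l by apply: map_f; rewrite mem_enum.
split=> Hlt; apply: le_trans (Hle _ Gk); rewrite /G Hlt le_max lexx //= orbT //.
Qed.

End Bar.


Section FreeC.
Variables (K : fieldType) (I : choiceType) (a : I -> RR).

Definition fpred (g : RR) : {pred {malg K[I]}} :=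
  fun x => all (fun i => a i <= g) (msupp x).

Lemma fpredP g x : reflect (forall i, i \in msupp x -> a i <= g) (x \in fpred g).
Proof. exact: allP. Qed.

Lemma fpred_closed g : GRing.submod_closed (fpred g).
Proof.
split.
  by apply/fpredP => i; rewrite msupp0 in_fset0.
move=> c x y /fpredP Hx /fpredP Hy; apply/fpredP => i Hi.
have := fsubsetP (msuppD_le (c *: x) y) i Hi; rewrite in_fsetU => /orP [Hi'|Hi'].
  by apply: Hx; apply: (fsubsetP (msuppZ_le c x)).
exact: Hy.
Qed.

HB.instance Definition _ g := GRing.isSubmodClosed.Build K _ (fpred g) (fpred_closed g).
Definition FS (g : RR) := {x : {malg K[I]} | x \in fpred g}.
HB.instance Definition _ g := [isSub of FS g for @sval _ (fun x => x \in fpred g)].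
HB.instance Definition _ g := [Choice of FS g by <:].
HB.instance Definition _ g := [SubChoice_isSubLmodule of FS g by <:].

Lemma fpred_mono g h x : g <= h -> x \in fpred g -> x \in fpred h.
Proof. by move=> H /fpredP Hx; apply/fpredP => i /Hx Hi; exact: le_trans Hi H. Qed.

Definition Fmp g h (H : g <= h) (x : FS g) : FS h :=
  Sub (val x) (fpred_mono H (valP x)).

Lemma valFmp g h (H : g <= h) x : val (Fmp H x) = val x.
Proof. by rewrite /Fmp SubK. Qed.

Lemma valD g (x y : FS g) : val (x + y) = val x + val y.
Proof. exact: raddfD. Qed.
Lemma valZ g c (x : FS g) : val (c *: x) = c *: val x.
Proof. exact: linearZ. Qed.

Lemma Fmp_lin g h (H : g <= h) : linear (Fmp H).
Proof. by move=> c x y; apply: val_inj; rewrite valD valZ !valFmp valD valZ. Qed.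

Lemma Fmp_id g (H : g <= g) x : Fmp H x = x.
Proof. by apply: val_inj; rewrite valFmp. Qed.

Lemma Fmp_comp g h k (H1 : g <= h) (H2 : h <= k) (H3 : g <= k) x :
  Fmp H2 (Fmp H1 x) = Fmp H3 x.
Proof. by apply: val_inj; rewrite !valFmp. Qed.

Definition freePM : pmod K :=
  @PMod K (fun g => (FS g : lmodType K)) Fmp Fmp_lin Fmp_id Fmp_comp.

Lemma egen_proof i : << (1 : K) *g i >> \in fpred (a i).
Proof.
apply/fpredP => j /(fsubsetP msuppU_le); rewrite in_fset1 => /eqP ->.
exact: lexx.
Qed.

Definition egen i : sp freePM (a i) := Sub << (1 : K) *g i >> (egen_proof i).

Lemma valegen i : val (egen i : FS (a i)) = << (1 : K) *g i >>.
Proof. by rewrite /egen SubK. Qed.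

Lemma malgUZ (c : K) (i : I) : << c *g i >> = c *: << (1 : K) *g i >>.
Proof.
apply/malgP => k; rewrite mcoeffZ !mcoeffU.
by case: (i == k); rewrite ?mulr1 ?mulr0.
Qed.


Lemma valsum g n (F : 'I_n -> FS g) : val (\sum_(k < n) F k) = \sum_(k < n) val (F k).
Proof. exact: raddf_sum. Qed.

Lemma free_basis_gen : free_basis (M := freePM) egen.
Proof.
move=> g; split.
- move=> x; pose S := msupp (val x).
  exists (size S), (fun k => tnth (in_tuple S) k).
  have hj : forall k : 'I_(size S), a (tnth (in_tuple S) k) <= g.
    by move=> k; apply: (fpredP _ _ (valP x)); apply: mem_tnth.
  exists hj, (fun k => (val x)@_(tnth (in_tuple S) k)).
  apply: val_inj; rewrite /= valsum {1}(monalgE (val x)) (big_tnth _ _ (msupp (val x))) /=.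
  rewrite /S /=; apply: eq_bigr => k _; exact: malgUZ.
- move=> n j hj c jinj Hs k0.
  have := congr1 (fun x : FS g => (val x)@_(j k0)) Hs.
  rewrite /= valsum raddf0 (raddf_sum (mcoeff (j k0))) (bigD1 k0) //=.
  rewrite mcoeffZ mcoeffU eqxx mulr1n mulr1 big1 ?addr0 //.
  move=> k Hk; rewrite mcoeffZ mcoeffU.
  by rewrite (inj_eq jinj) (negbTE Hk) mulr0n mulr0.
Qed.

Lemma free_gen : is_free freePM.
Proof. by exists I, a, egen; exact: free_basis_gen. Qed.

Variable N : pmod K.
Definition mpo g h (x : sp N g) : sp N h :=
  match Bool.bool_dec (g <= h) true with left H => mp N H x | right _ => 0 end.
Lemma mpoE g h (H : g <= h) x : mpo h x = mp N H x.
Proof. rewrite /mpo; case: Bool.bool_dec => [H'|]; first exact: mp_irr. by rewrite H. Qed.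

Variable v : forall i, sp N (a i).
Definition fext g (x : FS g) : sp N g :=
  \sum_(i <- msupp (val x)) (val x)@_i *: mpo g (v i).

Lemma fextE g (x : FS g) (D : {fset I}) : (msupp (val x) `<=` D)%fset ->
  fext x = \sum_(i <- D) (val x)@_i *: mpo g (v i).
Proof.
move=> sD; rewrite /fext (big_fset_incl _ sD) // => i _ Hi.
by rewrite mcoeff_outdom // scale0r.
Qed.

Lemma fext_lin g : linear (@fext g).
Proof.
move=> c x y.
pose D := (msupp (val x) `|` msupp (val y))%fset.
have sx : (msupp (val x) `<=` D)%fset by apply: fsubsetUl.
have sy : (msupp (val y) `<=` D)%fset by apply: fsubsetUr.
have sxy : (msupp (val (c *: x + y)%R) `<=` D)%fset.
  rewrite valD valZ; apply: (fsubset_trans (msuppD_le (c *: val x) (val y))).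
  by rewrite /D; apply: fsetSU; apply: msuppZ_le.
rewrite (fextE sxy) (fextE sx) (fextE sy) scaler_sumr -big_split /=.
by apply: eq_bigr => i _; rewrite mcoeffD mcoeffZ scalerDl scalerA.
Qed.

Lemma fext_nat g h (H : g <= h) (x : FS g) :
  mp N H (fext x) = fext (Fmp H x).
Proof.
rewrite /fext valFmp (lf_sum (@mpL _ N _ _ H)); apply: eq_big_seq => i Hi.
have Hig : a i <= g by apply: (fpredP _ _ (valP x)).
rewrite mpZ (mpoE Hig) (mpoE (le_trans Hig H)) mpc; congr (_ *: _); exact: mp_irr.
Qed.

Definition fextM : pmor freePM N := @PMor K freePM N fext fext_lin fext_nat.

Lemma fext_egen i : fext (egen i : FS (a i)) = v i.
Proof.
rewrite /fext valegen msuppU oner_eq0 big_seq_fset1 mcoeffUU scale1r.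
by rewrite (mpoE (lexx (a i))) mp_id.
Qed.

End FreeC.


Section Cover.
Variables (K : fieldType) (N : pmod K) (P : forall g, sp N g -> bool).

Definition cI : choiceType := {g : RR & sp N g}.
Definition ca (i : cI) : RR := projT1 i.
Definition cv (i : cI) : sp N (ca i) := if P (projT2 i) then projT2 i else 0.
Definition coverN : pmod K := @freePM K cI ca.
Definition coverd : pmor coverN N := @fextM K cI ca N cv.

Hypothesis CP0 : forall g, P (0 : sp N g).
Hypothesis CPL : forall g c (x y : sp N g), P x -> P y -> P (c *: x + y).
Hypothesis CPmp : forall g h (H : g <= h) (x : sp N g), P x -> P (mp N H x).

Lemma cover_free : is_free coverN.
Proof. exact: free_gen. Qed.

Lemma cover_im g y : P y <-> exists x, y = coverd g x.
Proof.
split.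
  move=> Py; exists (@egen K cI ca (existT _ g y)).
  rewrite /coverd /=; transitivity (cv (existT _ g y)); first by rewrite /cv /= Py.
  exact: (esym (fext_egen cv (existT _ g y))).
case=> x ->; rewrite /coverd /= /fext.
have Hs : forall (r : seq cI) (F : cI -> sp N g), (forall i, P (F i)) ->
    P (\sum_(i <- r) F i).
  elim=> [|i r IH] F HF; first by rewrite big_nil.
  by rewrite big_cons; have := CPL 1 (HF i) (IH F HF); rewrite scale1r.
apply: Hs => i.
have := CPL ((val x)@_i) (_ : P (mpo g (cv i))) (CP0 g); rewrite addr0; apply.
rewrite /mpo; case: Bool.bool_dec => [H|_]; last exact: CP0.
apply: CPmp; rewrite /cv; case: ifP => //; by [].
Qed.
End Cover.

Section Ker.
Variables (K : fieldType) (A B : pmod K) (f : pmor A B).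
Definition kerP g (x : sp A g) := f g x == 0.
Lemma kerP0 g : kerP (0 : sp A g).
Proof. by rewrite /kerP mor0. Qed.
Lemma kerPL g c (x y : sp A g) : kerP x -> kerP y -> kerP (c *: x + y).
Proof. by rewrite /kerP morD morZ => /eqP -> /eqP ->; rewrite scaler0 addr0. Qed.
Lemma kerPmp g h (H : g <= h) (x : sp A g) : kerP x -> kerP (mp A H x).
Proof. by rewrite /kerP -mor_nat => /eqP ->; rewrite mp0. Qed.
End Ker.

Section Resol.
Variables (K : fieldType) (M : pmod K).

Record stage := Stage { sN : pmod K; sP : pmod K; sf : pmor sN sP }.

Definition trueP g (x : sp M g) := true.

Fixpoint stg (i : nat) : stage :=
  match i with
  | 0 => Stage (coverd trueP)
  | i'.+1 => let s := stg i' in Stage (coverd (kerP (sf s)))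
  end.

Definition RF i := sN (stg i).
Definition Rd i : pmor (RF i.+1) (RF i) := sf (stg i.+1).
Definition Reps : pmor (RF 0) M := sf (stg 0).

Lemma res_exists : free_resolution Rd Reps.
Proof.
split.
- by case=> [|i]; apply: cover_free.
- move=> g y; apply/(cover_im (P := trueP)) => //.
- move=> g y; apply: (iff_trans (rwP eqP)); apply: (cover_im (P := kerP Reps)).
  + exact: kerP0.
  + exact: kerPL.
  + exact: kerPmp.
- move=> i g y; apply: (iff_trans (rwP eqP)); apply: (cover_im (P := kerP (Rd i))).
  + exact: kerP0.
  + exact: kerPL.
  + exact: kerPmp.
Qed.
End Resol.

Lemma part2 (K : fieldType) (M : pmod K) (n : nat) (s : 'I_n -> RR * RR) :
  barcode_decomp M s ->
   forall (F : nat -> pmod K) (d : forall i, pmor (F i.+1) (F i))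
     (eps : pmor (F 0%N) M), free_resolution d eps ->
   crit_series_value d (C_coef s).
Proof.
move=> bd F d eps fr g.
have pos := bd.1.
have [u [B1 B2 B3 B4]] := bar_basis bd.
have [e [eg He]] := e_exists s g.
pose n0 := #|[pred k | (s k).1 == g]|.
pose n1 := #|[pred k | (s k).1 + (s k).2 == g]|.
have h0 : hdim d g 0%N n0 := H0_eq fr (H0M B1 B2 B3 B4 pos g).
have h1 : hdim d g 1%N n1.
  apply: (@H1_eq _ _ _ _ _ fr g e eg).
  - exact: (Psurj B1 B3 B4 He).
  - exact: (Pinj B1 B2 B3 B4 He).
    exact: (H1M B1 B2 B3 B4 pos eg He).
pose D i := match i with 0 => n0 | 1 => n1 | _ => 0%N end.
have hD : forall i, hdim d g i (D i).
  by case=> [|[|i]] //; apply: (hdim_vanish fr).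
have uq : forall i m m', hdim d g i m -> hdim d g i m' -> m = m'.
  by move=> i m m'; apply: qdim_uniq; apply: (hbound_sub d g i).
split.
- by move=> i; exists (D i).
- by exists 2%N => -[|[|i]] //= _; apply: (hdim_vanish fr).
- move=> N dims Hd HN.
  have Ed : forall i, dims i = D i by move=> i; exact: uq (Hd i) (hD i).
  rewrite /C_coef -/n0 -/n1; under eq_bigr do rewrite Ed.
  case: N HN => [|[|N]] HN.
  + rewrite big_ord0.
    have := HN 0%N isT; have := HN 1%N isT; rewrite !Ed /= => -> ->.
    by rewrite subrr.
  + rewrite big_ord1 /=; have := HN 1%N isT; rewrite Ed /= => ->.
    by rewrite expr0 mul1r subr0.
  + rewrite 2!big_ord_recl /= big1 ?addr0; last by move=> i _; rewrite mulr0.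
    by rewrite expr0 expr1 mul1r mulN1r.
Qed.

Theorem proposition6 (K : fieldType) (M : pmod K) :
  fin_presented M -> pm_bounded M ->
  (exists (F : nat -> pmod K) (d : forall i, pmor (F i.+1) (F i))
     (eps : pmor (F 0%N) M), free_resolution d eps) /\
  (forall (n : nat) (s : 'I_n -> RR * RR), barcode_decomp M s ->
   forall (F : nat -> pmod K) (d : forall i, pmor (F i.+1) (F i))
     (eps : pmor (F 0%N) M), free_resolution d eps ->
   crit_series_value d (C_coef s)).
Proof.
move=> _ _; split; last exact: part2.
by exists (RF M), (Rd M), (Reps M); apply: res_exists.
Qed.
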